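(* Let $P\in\mathbb{R}_+^{n\times n}$ be sub-stochastic, $w\in\mathbb{R}^n_+$, $c\in\mathbb{R}^n$, and let $\mathcal X=\{x\in\mathbb{R}^n:\,x=S_0^w(P'x+c)\}$. For $x\in\mathcal X$ define the partition $\mathcal V=\{1,\dots,n\}=\mathcal V^x_-\cup\mathcal V^x_0\cup\mathcal V^x_+$ by $\mathcal V^x_+=\{i:\,c_i+\sum_{k}P_{ki}x_k>w_i\}$, $\mathcal V^x_0=\{i:\,0\le c_i+\sum_kP_{ki}x_k\le w_i\}$, $\mathcal V^x_-=\{i:\,c_i+\sum_kP_{ki}x_k<0\}$. Then this partition is the same for all equilibria $x\in\mathcal X$.
   Context: $P$ sub-stochastic means $P$ nonnegative with $P\mathbbm{1}\le\mathbbm{1}$ (stochastic matrices included). $(S_0^w(x))_i=\min\{\max\{x_i,0\},w_i\}$; $P'$ is the transpose. *)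

(* Defs.v *)
From mathcomp Require Import all_boot all_order all_algebra.
From mathcomp Require Import reals.
Set Implicit Arguments. Unset Strict Implicit. Unset Printing Implicit Defensive.
Import Order.TTheory GRing.Theory Num.Theory.
Local Open Scope ring_scope.

Definition substochastic (R : realType) (n : nat) (P : 'M[R]_n) : Prop :=
  (forall i j, 0 <= P i j) /\ (forall i, \sum_(j < n) P i j <= 1).

Definition S0 (R : realType) (n : nat) (w y : 'cV[R]_n) : 'cV[R]_n :=
  \col_i Num.min (Num.max (y i 0) 0) (w i 0).

Definition preact (R : realType) (n : nat) (P : 'M[R]_n) (c x : 'cV[R]_n)
  : 'cV[R]_n := P^T *m x + c.

Definition equilibrium (R : realType) (n : nat) (P : 'M[R]_n) (w c x : 'cV[R]_n)
  : Prop := x = S0 w (preact P c x).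

Definition Vplus (R : realType) (n : nat) (P : 'M[R]_n) (w c x : 'cV[R]_n)
  : {set 'I_n} := [set i | preact P c x i 0 > w i 0].
Definition Vzero (R : realType) (n : nat) (P : 'M[R]_n) (w c x : 'cV[R]_n)
  : {set 'I_n} := [set i | (0 <= preact P c x i 0) && (preact P c x i 0 <= w i 0)].
Definition Vminus (R : realType) (n : nat) (P : 'M[R]_n) (w c x : 'cV[R]_n)
  : {set 'I_n} := [set i | preact P c x i 0 < 0].

(* Main.v *)
Require Import Defs.
From mathcomp Require Import all_boot all_order all_algebra.
From mathcomp Require Import reals.
From mathcomp Require Import lra.
Import Order.TTheory GRing.Theory Num.Theory.
Local Open Scope ring_scope.

Definition clip {R : realType} (w a : R) := Num.min (Num.max a 0) w.

Ltac splitall :=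
  repeat match goal with
  | |- context [Num.max ?a ?b] => rewrite (maxEle a b); case: (lerP a b) => ?
  | |- context [Num.min ?a ?b] => rewrite (minEle a b); case: (lerP a b) => ?
  | |- context [`|?z|] => case: (lerP 0 z) => ?; [rewrite (ger0_norm (x:=z)) //|rewrite (ltr0_norm (x:=z)) //]
  end.

Lemma clip_le (R : realType) (w a b : R) : 0 <= w ->
  `|clip w a - clip w b| <= `|a - b|.
Proof. move=> hw; rewrite /clip; splitall; lra. Qed.

Lemma clip_eq (R : realType) (w a b : R) : 0 <= w ->
  `|clip w a - clip w b| = `|a - b| -> (a < 0) = (b < 0) /\ (w < a) = (w < b).
Proof.
move=> hw; rewrite /clip.
case: (ltrP a 0) => ha; case: (ltrP b 0) => hb; case: (ltrP w a) => ha'; case: (ltrP w b) => hb';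
  splitall; try lra.
Qed.

Theorem proposition2 (R : realType) (n : nat) (P : 'M[R]_n) (w c : 'cV[R]_n)
  (hP : substochastic P) (hw : forall i, 0 <= w i 0)
  (x y : 'cV[R]_n) (hx : equilibrium P w c x) (hy : equilibrium P w c y) :
  [/\ Vminus P w c x = Vminus P w c y,
      Vzero P w c x = Vzero P w c y &
      Vplus P w c x = Vplus P w c y].
Proof.
case: hP => hP0 hP1.
set u := preact P c x; set v := preact P c y.
have ex i : x i 0 = clip (w i 0) (u i 0) by rewrite {1}hx /S0 mxE.
have ey i : y i 0 = clip (w i 0) (v i 0) by rewrite {1}hy /S0 mxE.
set d := fun k => x k 0 - y k 0.
have euv i : u i 0 - v i 0 = \sum_k P k i * d k.
  rewrite /u /v /preact !mxE opprD addrACA subrr addr0 -sumrB.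
  by apply: eq_bigr => k _; rewrite /d !mxE mulrBr.
have le1 i : `|d i| <= `|u i 0 - v i 0| by rewrite /d ex ey; apply: clip_le.
have S1 : \sum_i `|u i 0 - v i 0| <= \sum_i `|d i|.
  apply: (le_trans (y := \sum_i \sum_k P k i * `|d k|)).
    apply: ler_sum => i _; rewrite euv; apply: (le_trans (ler_norm_sum _ _ _)).
    by apply: ler_sum => k _; rewrite normrM ger0_norm.
  rewrite exchange_big /=; apply: ler_sum => k _.
  rewrite -mulr_suml; apply: ler_piMl => //.
have eq1 i : `|d i| = `|u i 0 - v i 0|.
  have H : \sum_j (`|u j 0 - v j 0| - `|d j|) = 0.
    apply/eqP; rewrite eq_le sumrB subr_le0 S1 /= subr_ge0.
    by apply: ler_sum => j _.
  have G : forall j, true -> 0 <= `|u j 0 - v j 0| - `|d j| by move=> j _; rewrite subr_ge0.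
  by apply/eqP; rewrite eq_sym -subr_eq0; apply/eqP; apply: (psumr_eq0P G H).
have key i : (u i 0 < 0) = (v i 0 < 0) /\ (w i 0 < u i 0) = (w i 0 < v i 0).
  by apply: clip_eq => //; rewrite -ex -ey; exact: (eq1 i).
split; apply/setP => i; rewrite !inE; case: (key i) => h1 h2.
- by rewrite -/u -/v h1.
- by rewrite -/u -/v !leNgt h1 h2.
- by rewrite -/u -/v h2.
Qed.
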